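(* Assume the standing setting below. Let $\alpha\in(0,1/6]$ with $\alpha n$ an integer, let $P_1\subseteq X$ with $|P_1|=\alpha n$, let $\beta\ge1$, and let $T_\alpha\subseteq P_1$ with $|T_\alpha|\le k_+$ satisfy $R(P_1,T_\alpha)\le\beta\min\{R(P_1,T):T\subseteq P_1,|T|\le k_+\}$. Let $\mathcal{B}_a$ be a $(\phi_\alpha/15)$-linear bin division of $X$ with respect to $\mathrm{OPT}$. Suppose $\mathcal{B}_a$ is trivial or well-represented in $P_1$ for $X$, and that for every $i$ with $|C_i^*|\ge\phi_\alpha$, $C_i^*$ is well-represented in $P_1$ for $X$. Then $$R(X^\alpha_{\mathrm{large}},T_\alpha)\le(18\beta+10)\,R(X,\mathrm{OPT}).$$
   Context: Standing setting: $(X,\rho)$ is a finite metric space with $|X|=n$; $k\ge 2$ is an integer and $\delta\in(0,1)$; $\log$ is the natural logarithm; $k_+:=k+38\log(32k/\delta)$. For nonempty $T\subseteq X$, $\rho(x,T):=\min_{y\in T}\rho(x,y)$ and $R(S,T):=\sum_{x\in S}\rho(x,T)$; ties are broken by a fixed ordering. $\mathrm{OPT}=\{c_1^*,\ldots,c_k^*\}$ is a set of at most $k$ points of $X$ minimizing $R(X,\cdot)$, and $C_i^*:=\{x\in X: i=\arg\min_{j\in[k]}\rho(c_j^*,x)\}$. For $\alpha>0$, $\phi_\alpha:=150\log(32k/\delta)/\alpha$; $X^\alpha_{\mathrm{large}}:=\bigcup\{C_i^*:|C_i^*|\ge\phi_\alpha\}$. For finite $W$, $A,B\subseteq W$, $B$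 is well-represented in $A$ for $W$ if $|B\cap A|/|B|\in[r/2,\frac32 r]$ with $r=|A|/|W|$; a bin division is well-represented if all its bins are. A $z$-linear bin division ($z>0$) of $W$ with respect to $T$ is a partition $(\mathcal{B}(1),\ldots,\mathcal{B}(L))$ of $W$ with: (1) if $z\le|W|$, $|\mathcal{B}(i)|\ge z(i+1)/2$ for all $i$; otherwise it is trivial, $\mathcal{B}(1):=W$; (2) $|\mathcal{B}(1)|\le\frac52 z$; (3) $|\mathcal{B}(i+1)|/|\mathcal{B}(i)|\le3/2$; (4) $\rho(x,T)\ge\rho(x',T)$ whenever $x\in\mathcal{B}(i)$, $x'\in\mathcal{B}(i+1)$. *)

(* Defs.v *)
From HB Require Import structures.
From mathcomp Require Import all_boot all_order all_algebra.
From mathcomp Require Import reals exp.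

Set Implicit Arguments.
Unset Strict Implicit.
Unset Printing Implicit Defensive.

Import Order.TTheory GRing.Theory Num.Theory.
Local Open Scope ring_scope.

Section Defs.
Variables (R : realType) (T : finType).
Implicit Types (rho : T -> T -> R) (A B W S : {set T}).

(* (X, rho) is a metric space (X is the whole finite type T). *)
Definition is_metric rho : Prop :=
  [/\ forall x y, 0 <= rho x y,
      forall x y, rho x y = 0 <-> x = y,
      forall x y, rho x y = rho y x &
      forall x y z, rho x z <= rho x y + rho y z].

(* rho(x,S) = min_{y in S} rho x y for nonempty S (0 by convention if S = set0;
   the empty set never occurs where this matters). *)
Definition distS rho (x : T) S : R :=
  match [pick y in S] with
  | Some y0 => \big[Num.min/rho x y0]_(y in S) rho x y
  | None => 0
  end.

Definition cost rho S S' : R := \sum_(x in S) distS rho x S'.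

Definition kplus (k : nat) (delta : R) : R :=
  k%:R + 38 * ln (32 * k%:R / delta).

Definition phi (k : nat) (delta alpha : R) : R :=
  150 * ln (32 * k%:R / delta) / alpha.

Definition centers (k : nat) (c : 'I_k -> T) : {set T} := [set c j | j : 'I_k].

(* C_i^* = {x : i = argmin_j rho(c_j, x)}, ties broken toward the smallest
   index. *)
Definition cluster rho (k : nat) (c : 'I_k -> T) (i : 'I_k) : {set T} :=
  [set x | [forall j : 'I_k,
              (rho (c i) x <= rho (c j) x) &&
              ((j < i)%N ==> (rho (c i) x < rho (c j) x))]].

Definition Xlarge rho (k : nat) (c : 'I_k -> T) (ph : R) : {set T} :=
  \bigcup_(i : 'I_k | ph <= #|cluster rho c i|%:R) cluster rho c i.

Definition well_rep W A B : Prop :=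
  let r := #|A|%:R / #|W|%:R : R in
  r / 2 <= #|B :&: A|%:R / #|B|%:R <= 3 / 2 * r.

Definition linear_bin_division rho (z : R) W S (L : nat) (B : nat -> {set T})
  : Prop :=
  [/\
      (forall i, (1 <= i <= L)%N -> B i \subset W) /\
      (forall x, x \in W -> exists2 i, (1 <= i <= L)%N & x \in B i) /\
      (forall i j, (1 <= i <= L)%N -> (1 <= j <= L)%N -> i != j ->
         [disjoint B i & B j]),
      (* (1) *)
      (if z <= #|W|%:R then
         forall i, (1 <= i <= L)%N -> z * (i.+1)%:R / 2 <= #|B i|%:R
       else L = 1%N /\ B 1%N = W),
      (* (2) *)
      #|B 1%N|%:R <= 5 / 2 * z,
      (forall i, (1 <= i < L)%N -> #|B i.+1|%:R / #|B i|%:R <= 3 / 2 :> R) &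
      (forall i x x', (1 <= i < L)%N -> x \in B i -> x' \in B i.+1 ->
         distS rho x' S <= distS rho x S)].

Definition trivial_bins W (L : nat) (B : nat -> {set T}) : Prop :=
  L = 1%N /\ B 1%N = W.

Definition well_rep_bins W A (L : nat) (B : nat -> {set T}) : Prop :=
  forall i, (1 <= i <= L)%N -> well_rep W A (B i).

End Defs.

(* Main.v *)
Require Import Defs.
From HB Require Import structures.
From mathcomp Require Import all_boot all_order all_algebra.
From mathcomp Require Import reals exp.
From mathcomp Require Import ring lra.
Import Order.TTheory GRing.Theory Num.Theory.
Local Open Scope ring_scope.

Section Aux.
Variables (R : realType) (T : finType) (rho : T -> T -> R).
Hypothesis hm : is_metric rho.

Lemma rho_ge0 x y : 0 <= rho x y. Proof. by case: hm. Qed.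
Lemma rho_xx x : rho x x = 0. Proof. by case: hm => _ h _ _; apply/h. Qed.
Lemma rho_sym x y : rho x y = rho y x. Proof. by case: hm. Qed.
Lemma rho_tri x y z : rho x z <= rho x y + rho y z. Proof. by case: hm. Qed.

Lemma distS_ge0 x (S : {set T}) : 0 <= distS rho x S.
Proof.
rewrite /distS; case: pickP => [y0 _|_] //.
apply: (big_ind (fun v => 0 <= v)) => [|a b ha hb|i _]; [exact: rho_ge0|by rewrite le_min ha hb|exact: rho_ge0].
Qed.

Lemma distS_le x (S : {set T}) y : y \in S -> distS rho x S <= rho x y.
Proof.
move=> yS; rewrite /distS; case: pickP => [y0 _|H]; last by rewrite H in yS.
by rewrite (bigD1 y) //= ge_min lexx.
Qed.

Lemma distS_att x (S : {set T}) : S != set0 -> exists2 y, y \in S & distS rho x S = rho x y.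
Proof.
move=> /set0Pn [y1 y1S]; rewrite /distS; case: pickP => [y0 y0S|H]; last by rewrite H in y1S.
apply: (big_ind (fun v => exists2 y, y \in S & v = rho x y)).
- by exists y0.
- move=> a b [ya ha ->] [yb hb ->]; case: (leP (rho x ya) (rho x yb)) => h.
  + by exists ya => //; rewrite min_l.
  + by exists yb => //; rewrite min_r // ltW.
- by move=> i iS; exists i.
Qed.

Lemma distS0 x (S : {set T}) : S = set0 -> distS rho x S = 0.
Proof. by move=> ->; rewrite /distS; case: pickP => [y|//]; rewrite inE. Qed.

Lemma distS_tri x y (S : {set T}) : distS rho x S <= rho x y + distS rho y S.
Proof.
have [->|nS] := eqVneq S set0.
  by rewrite !distS0 // addr0 rho_ge0.
have [y' y'S ->] := distS_att y S nS.
by apply: le_trans (distS_le x S y' y'S) (rho_tri _ _ _).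
Qed.

Lemma distS_in x (S : {set T}) : x \in S -> distS rho x S = 0.
Proof.
move=> xS; apply/eqP; rewrite eq_le distS_ge0 andbT.
by rewrite -(rho_xx x) distS_le.
Qed.

Lemma sum_sub (A B : {set T}) (f : T -> R) : (forall x, 0 <= f x) ->
  A \subset B -> \sum_(x in A) f x <= \sum_(x in B) f x.
Proof.
move=> f0 AB.
have -> : \sum_(x in B) f x = \sum_(x in B :&: A) f x + \sum_(x in B :\: A) f x.
  exact: big_setID.
rewrite (setIidPr AB) lerDl.
by apply: sumr_ge0 => i _.
Qed.

Lemma sum_bigcup (I : finType) (K : pred I) (F : I -> {set T}) (f : T -> R) :
 (forall i j, K i -> K j -> i != j -> [disjoint F i & F j]) ->
 \sum_(x in \bigcup_(i | K i) F i) f x = \sum_(i | K i) \sum_(x in F i) f x.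
Proof.
move=> dF.
pose G i := if K i then F i else set0.
have dG : forall i j, i != j -> [disjoint G i & G j].
  move=> i j ij; rewrite /G; case Ki: (K i); case Kj: (K j);
    rewrite -setI_eq0 ?set0I ?setI0 // setI_eq0; exact: dF.
have e1 : \bigcup_(i | K i) F i = \bigcup_i G i.
  by rewrite (big_mkcond K).
have e2 : \sum_(i | K i) \sum_(x in F i) f x = \sum_i \sum_(x in G i) f x.
  rewrite (big_mkcond K); apply: eq_bigr => i _; rewrite /G.
  by case: (K i) => //; rewrite big_set0.
rewrite e1 e2.
exact: (@partition_disjoint_bigcup _ _ _ _ _ G f dG).
Qed.


Lemma cluster_dist k (c : 'I_k -> T) i x : x \in cluster rho c i ->
  distS rho x (centers c) = rho x (c i).
Proof.
rewrite inE => /forallP H.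
apply/eqP; rewrite eq_le distS_le ?andbT; last by apply/imsetP; exists i.
have ne : centers c != set0 by apply/set0Pn; exists (c i); apply/imsetP; exists i.
have [y /imsetP [j _ ->] ->] := distS_att x _ ne.
by have /andP[h _] := H j; rewrite rho_sym (rho_sym x (c j)).
Qed.

Lemma cluster_disj k (c : 'I_k -> T) i j : i != j ->
  [disjoint cluster rho c i & cluster rho c j].
Proof.
wlog lt : i j / (i < j)%N.
  move=> W ij; case: (ltngtP i j) => h; first exact: W.
  - by rewrite disjoint_sym; apply: W => //; rewrite eq_sym.
  - by move: ij; rewrite (val_inj h) eqxx.
move=> _; rewrite -setI_eq0; apply/eqP/setP => x; rewrite !inE.
apply/negP => /andP[/forallP Hi /forallP Hj].
have /andP[h1 _] := Hi j.
have /andP[_ /implyP h2] := Hj i.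
by move: (h2 lt); rewrite ltNge h1.
Qed.

Lemma wr_up (W A Bs : {set T}) : well_rep R W A Bs ->
  #|Bs :&: A|%:R <= 3/2 * (#|A|%:R / #|W|%:R) * #|Bs|%:R :> R.
Proof.
rewrite /well_rep /= => /andP[_ h].
have [b0|bp] := posnP #|Bs|.
  have : (#|Bs :&: A| <= #|Bs|)%N by apply: subset_leq_card; apply: subsetIl.
  by rewrite b0 leqn0 => /eqP ->; rewrite mulr0.
by rewrite -ler_pdivrMr // ltr0n.
Qed.

Lemma wr_lo (W A Bs : {set T}) : well_rep R W A Bs ->
  (#|A|%:R / #|W|%:R) / 2 * #|Bs|%:R <= #|Bs :&: A|%:R :> R.
Proof.
rewrite /well_rep /= => /andP[h _].
have [b0|bp] := posnP #|Bs|.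
  by rewrite b0 mulr0.
by rewrite -ler_pdivlMr // ltr0n.
Qed.

End Aux.
Arguments wr_up {R T W A Bs}.
Arguments wr_lo {R T W A Bs}.
Arguments rho_ge0 {R T rho}.
Arguments rho_xx {R T rho}.
Arguments rho_sym {R T rho}.
Arguments rho_tri {R T rho}.
Arguments distS_ge0 {R T rho}.
Arguments distS_le {R T rho}.
Arguments distS_att {R T rho}.
Arguments distS0 {R T rho}.
Arguments distS_tri {R T rho}.
Arguments distS_in {R T rho}.
Arguments cluster_dist {R T rho}.
Arguments cluster_disj {R T rho}.
Arguments sum_sub {R T}. Arguments sum_bigcup {R T I}.
Theorem lemma7 (R : realType) (T : finType) (rho : T -> T -> R)
  (k : nat) (delta : R) (c : 'I_k -> T)
  (alpha beta : R) (m : nat) (P1 Ta : {set T})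
  (z : R) (L : nat) (B : nat -> {set T}) :
  is_metric rho ->
  (2 <= k)%N -> 0 < delta < 1 ->
  (forall S : {set T}, S != set0 -> (#|S| <= k)%N ->
     cost rho [set: T] (centers c) <= cost rho [set: T] S) ->
  0 < alpha <= 1 / 6 ->
  alpha * #|T|%:R = m%:R ->
  #|P1| = m ->
  1 <= beta ->
  Ta \subset P1 ->
  #|Ta|%:R <= kplus k delta ->
  (forall S : {set T}, S \subset P1 -> S != set0 -> #|S|%:R <= kplus k delta ->
     cost rho P1 Ta <= beta * cost rho P1 S) ->
  z = phi k delta alpha / 15 ->
  linear_bin_division rho z [set: T] (centers c) L B ->
  trivial_bins [set: T] L B \/ well_rep_bins R [set: T] P1 L B ->
  (forall i : 'I_k, phi k delta alpha <= #|cluster rho c i|%:R ->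
     well_rep R [set: T] P1 (cluster rho c i)) ->
  cost rho (Xlarge rho c (phi k delta alpha)) Ta
    <= (18 * beta + 10) * cost rho [set: T] (centers c).
Proof.
move=> hm k2 /andP[d0 d1] _ /andP[a0 a6] han hP1 b1 TaP1 _ Tamin hz
  [[partS [partC partD]] h1 h2 h3 h4] hbins hclus.
set phi0 := phi k delta alpha.
set D := fun x => distS rho x (centers c).
set Del := cost rho [set: T] (centers c).
have D0 : forall x, 0 <= D x by move=> x; exact: (distS_ge0 hm).
have Del0 : 0 <= Del by apply: sumr_ge0 => x _; exact: D0.
have lnp : 0 < ln (32 * k%:R / delta).
  apply: ln_gt0; rewrite ltr_pdivlMr // mul1r.
  have : (1 < 32 * k)%N by apply: (leq_trans k2); rewrite leq_pmull.
  rewrite -(ltr_nat R) natrM => h; apply: lt_trans d1 (le_lt_trans _ h).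
  by [].
have phip : 0 < phi0 by rewrite /phi0 /phi divr_gt0 // mulr_gt0.
have zp : 0 < z by rewrite hz divr_gt0.
have nolarge : (forall i, ~~ (phi0 <= #|cluster rho c i|%:R)) ->
    cost rho (Xlarge rho c phi0) Ta <= (18 * beta + 10) * Del.
  move=> H; rewrite /Xlarge big_pred0; last by move=> i; apply/negbTE/H.
  rewrite /cost big_set0; apply: mulr_ge0 => //; lra.
have cardC : forall i, (#|cluster rho c i| <= #|T|)%N by move=> i; exact: max_card.
have [n0|np] := posnP #|T|.
  apply: nolarge => i; rewrite -ltNge; apply: le_lt_trans phip.
  by have := cardC i; rewrite n0 leqn0 => /eqP ->.
case: hbins => [[L1 B1T] | wrb].
  apply: nolarge => i; rewrite -ltNge.
  have e : (#|T|%:R : R) <= phi0 / 6.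
    by move: h2; rewrite B1T cardsT hz /phi0; lra.
  apply: le_lt_trans (le_trans _ e) _; first by rewrite ler_nat.
  lra.
have nR : (#|T|%:R : R) != 0 by rewrite pnatr_eq0 -lt0n.
have hr : (#|P1|%:R / #|[set: T]|%:R : R) = alpha.
  by rewrite cardsT hP1 -han mulfK.
have [x0 _] : exists x0 : T, true.
  by move: np; rewrite -cardsT card_gt0 => /set0Pn [x _]; exists x.
have L1 : (1 <= L)%N.
  have [i /andP[i1 iL] _] := partC x0 (in_setT x0).
  exact: leq_trans iL.
have hcard1 : (#|B 1%N :&: P1|%:R : R) <= alpha * phi0 / 4.
  have := wr_up (wrb 1%N L1); rewrite hr => h.
  move: h2; rewrite hz -/phi0 => h2'.
  nra.
have hbin : forall j, (1 <= j < L)%N ->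
    \sum_(x in B j.+1 :&: P1) D x <= 9/4 * alpha * \sum_(x in B j) D x.
  move=> j j1.
  have npj : (0 < #|B j|)%N.
    move: h1; case: ifP => _ h1.
      have := h1 j; move/andP: j1 => [j1a j1b]; rewrite j1a (ltnW j1b) => /(_ isT) h.
      rewrite -(ltr_nat R) mulr0n; apply: lt_le_trans h.
      by rewrite divr_gt0 // mulr_gt0 // ltr0n.
    by case: h1 => L1' _; move/andP: j1 => [j1a]; rewrite L1' ltnNge j1a.
  have npR : (0 : R) < #|B j|%:R by rewrite ltr0n.
  have h3' := h3 j j1; rewrite ler_pdivrMr // in h3'.
  have wu := wr_up (wrb j.+1 (elimT andP j1).2); rewrite hr in wu.
  have key : (\sum_(x in B j.+1 :&: P1) D x) * #|B j|%:R <= #|B j.+1 :&: P1|%:R * \sum_(x in B j) D x.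
    rewrite mulr_suml.
    apply: (@le_trans _ _ (\sum_(x in B j.+1 :&: P1) \sum_(y in B j) D y)); last first.
      by rewrite sumr_const mulr_natl.
    apply: ler_sum => x; rewrite inE => /andP[xB _].
    have -> : D x * #|B j|%:R = \sum_(y in B j) D x by rewrite sumr_const mulr_natr.
    apply: ler_sum => y yB.
    exact: (h4 j).
  set a := \sum_(x in B j.+1 :&: P1) D x in key *.
  set Sp := \sum_(x in B j) D x in key *.
  have Sp0 : 0 <= Sp by apply: sumr_ge0.
  have p1 : 0 <= (3/2 * alpha * #|B j.+1|%:R - #|B j.+1 :&: P1|%:R) * Sp.
    by apply: mulr_ge0 => //; lra.
  have p2 : 0 <= (3/2 * #|B j|%:R - #|B j.+1|%:R) * (alpha * Sp).
    by apply: mulr_ge0; [lra | apply: mulr_ge0 => //; lra].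
  have : a * #|B j|%:R <= (9/4 * alpha * Sp) * #|B j|%:R by lra.
  by rewrite ler_pM2r.
have hA : \sum_(x in P1 :\: B 1%N) D x <= 9/4 * alpha * Del.
  have cov : P1 :\: B 1%N \subset \bigcup_(i : 'I_L.+1 | (2 <= i)%N) (B i :&: P1).
    apply/subsetP => x; rewrite !inE => /andP[xB xP].
    have [i /andP[i1 iL] xBi] := partC x (in_setT x).
    apply/bigcupP; exists (inord i); rewrite inordK ?ltnS //.
      rewrite ltn_neqAle i1 andbT; apply/negP => /eqP e.
      by move: xB; rewrite e xBi.
    by rewrite inE xBi xP.
  have dis1 : forall i j : 'I_L.+1, (2 <= i)%N -> (2 <= j)%N -> i != j ->
      [disjoint B i :&: P1 & B j :&: P1].
    move=> i j i2 j2 ij; apply: (disjointW (subsetIl _ _) (subsetIl _ _)).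
    apply: partD => //; [by rewrite (ltnW i2) -ltnS ltn_ord | by rewrite (ltnW j2) -ltnS ltn_ord].
  have p0 : forall i : 'I_L.+1, (2 <= i)%N -> (0 < i)%N.
    by move=> i i2; apply: leq_trans i2.
  have dis2 : forall i j : 'I_L.+1, (2 <= i)%N -> (2 <= j)%N -> i != j ->
      [disjoint B i.-1 & B j.-1].
    move=> i j i2 j2 ij.
    have r1 : forall l : 'I_L.+1, (2 <= l)%N -> (0 < l.-1 <= L)%N.
      move=> l l2; apply/andP; split; first by rewrite -ltnS prednK // p0.
      by apply: leq_trans (leq_pred _) _; rewrite -ltnS ltn_ord.
    apply: partD; rewrite ?r1 //.
    apply: contraNneq ij => e; apply/eqP; apply: val_inj.
    by rewrite /= -(prednK (p0 i i2)) -(prednK (p0 j j2)) e.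
  apply: le_trans (sum_sub _ _ D D0 cov) _.
  rewrite (sum_bigcup _ _ _ dis1).
  apply: (@le_trans _ _ (\sum_(i : 'I_L.+1 | (2 <= i)%N) 9/4 * alpha * \sum_(x in B i.-1) D x)).
    apply: ler_sum => i i2.
    have := hbin i.-1; rewrite prednK ?p0 //; apply.
    apply/andP; split; first by rewrite -ltnS prednK // p0.
    by rewrite -ltnS ltn_ord.
  rewrite -mulr_sumr -(sum_bigcup _ _ _ dis2).
  apply: ler_wpM2l; first lra.
  exact: sum_sub _ _ D D0 (subsetT _).
have [p0 p0P] : exists p0, p0 \in P1.
  apply/set0Pn; rewrite -card_gt0 hP1 -(ltr_nat R) -han.
  by rewrite mulr_gt0 // ltr0n.
pose sj j := odflt p0 [pick y in P1 | rho (c j) y == distS rho (c j) P1].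
have sjP : forall j, sj j \in P1 /\ forall y, y \in P1 -> rho (c j) (sj j) <= rho (c j) y.
  move=> j; rewrite /sj; case: pickP => [y /andP[yP /eqP e]|H].
    by split => // y' y'P; rewrite e distS_le.
  have [|y yP e] := @distS_att _ _ rho (c j) P1; first by apply/set0Pn; exists p0.
  by move: (H y); rewrite yP e eqxx.
pose S := [set sj j | j : 'I_k] :|: (B 1%N :&: P1).
have SP1 : S \subset P1.
  apply/subsetP => x; rewrite !inE => /orP[/imsetP[j _ ->]|/andP[_ //]].
  by case: (sjP j).
have S0 : S != set0.
  apply/set0Pn; exists (sj (Ordinal (leq_trans (isT : (0 < 2)%N) k2))).
  by rewrite !inE; apply/orP; left; apply/imsetP; eexists.
have aphi : alpha * phi0 = 150 * ln (32 * k%:R / delta).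
  rewrite /phi0 /phi; field; exact: lt0r_neq0.
have Sk : #|S|%:R <= kplus k delta.
  have c1 : (#|S| <= k + #|B 1%N :&: P1|)%N.
    apply: leq_trans (leq_card_setU _ _).1 _; rewrite leq_add2r.
    by apply: leq_trans (leq_imset_card _ _) _; rewrite card_ord.
  move: c1; rewrite -(ler_nat R) natrD /kplus => c1.
  lra.
have ne : centers c != set0.
  by apply/set0Pn; exists (c (Ordinal (leq_trans (isT : (0 < 2)%N) k2))); apply/imsetP; eexists.
have hS : cost rho P1 S <= 2 * \sum_(x in P1 :\: B 1%N) D x.
  rewrite /cost (big_setID (B 1%N)) /= big1 ?add0r; last first.
    move=> x; rewrite inE => /andP[xP xB]; apply: (distS_in hm).
    by rewrite !inE xB xP orbT.
  rewrite mulr_sumr; apply: ler_sum => x; rewrite inE => /andP[_ xP].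
  have [y /imsetP[j _ ->] e] := @distS_att _ _ rho x (centers c) ne.
  rewrite /D e.
  have sS : sj j \in S by rewrite !inE; apply/orP; left; apply/imsetP; exists j.
  apply: le_trans (distS_le x S _ sS) _.
  apply: le_trans (rho_tri hm x (c j) _) _.
  have := (sjP j).2 x xP; rewrite (rho_sym hm (c j) x) => h.
  lra.
have hTa : cost rho P1 Ta <= beta * (9/2 * alpha * Del).
  apply: le_trans (Tamin S SP1 S0 Sk) _.
  apply: ler_wpM2l; first lra.
  lra.
pose Q i := cluster rho c i :&: (P1 :\: B 1%N).
pose g x := D x + distS rho x Ta.
have g0 : forall x, 0 <= g x by move=> x; rewrite /g addr_ge0 // (distS_ge0 hm).
have hclu : forall i, phi0 <= #|cluster rho c i|%:R ->
   cost rho (cluster rho c i) Ta <=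
     \sum_(x in cluster rho c i) D x + 4 / alpha * \sum_(x in Q i) g x.
  move=> i hi.
  have wl := wr_lo (hclus i hi); rewrite hr in wl.
  set C := cluster rho c i in hi wl *.
  have cc : (#|C :&: P1| <= #|Q i| + #|B 1%N :&: P1|)%N.
    apply: leq_trans (subset_leq_card _) (leq_card_setU _ _).1.
    apply/subsetP => x; rewrite !inE => /andP[xC xP].
    by case: (x \in B 1%N); rewrite ?xC ?xP ?orbT.
  move: cc; rewrite -(ler_nat R) natrD => cc.
  set q := (#|Q i|%:R : R) in cc *.
  set W := \sum_(x in Q i) g x.
  have W0 : 0 <= W by apply: sumr_ge0.
  have e : alpha * phi0 <= alpha * #|C|%:R by rewrite ler_pM2l.
  have aph : 0 < alpha * phi0 by rewrite mulr_gt0.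
  have hq : alpha * #|C|%:R <= 4 * q by lra.
  have qp : 0 < q by lra.
  have pt : forall x, x \in C -> q * distS rho x Ta <= q * D x + W.
    move=> x xC.
    have -> : q * distS rho x Ta = \sum_(y in Q i) distS rho x Ta by rewrite sumr_const mulr_natl.
    have -> : q * D x + W = \sum_(y in Q i) (D x + g y) by rewrite big_split /= sumr_const mulr_natl.
    apply: ler_sum => y /setIP [yC _].
    apply: le_trans (distS_tri hm x y Ta) _; rewrite /g addrA lerD2r.
    apply: le_trans (rho_tri hm x (c i) y) _.
    by rewrite /D (cluster_dist hm _ _ _ _ xC) (cluster_dist hm _ _ _ _ yC) (rho_sym hm (c i) y).
  have sumC : q * cost rho C Ta <= q * \sum_(x in C) D x + #|C|%:R * W.
    have -> : #|C|%:R * W = \sum_(x in C) W by rewrite sumr_const mulr_natl.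
    rewrite /cost !mulr_sumr.
    rewrite -big_split; apply: ler_sum => x xC; exact: pt.
  have hC : #|C|%:R <= 4 / alpha * q.
    rewrite -(ler_pM2l a0) (_ : alpha * (4 / alpha * q) = 4 * q) //.
    by field; exact: lt0r_neq0.
  rewrite -(ler_pM2l qp) mulrDr.
  apply: le_trans sumC _; rewrite lerD2l.
  apply: le_trans (ler_wpM2r W0 hC) _.
  rewrite (_ : q * (4 / alpha * W) = 4 / alpha * q * W) //.
  by field; exact: lt0r_neq0.
pose K := fun i : 'I_k => phi0 <= #|cluster rho c i|%:R.
have disC : forall i j : 'I_k, K i -> K j -> i != j -> [disjoint cluster rho c i & cluster rho c j].
  by move=> i j _ _ ij; exact: cluster_disj.
have disQ : forall i j : 'I_k, K i -> K j -> i != j -> [disjoint Q i & Q j].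
  move=> i j _ _ ij; apply: (disjointW (subsetIl _ _) (subsetIl _ _)).
  exact: cluster_disj.
rewrite /cost /Xlarge -/phi0.
rewrite (@sum_bigcup _ _ _ K (cluster rho c) (fun x => distS rho x Ta) disC).
apply: le_trans (ler_sum _ (fun i hi => hclu i hi)) _.
rewrite big_split /= -mulr_sumr.
rewrite -(@sum_bigcup _ _ _ K (cluster rho c) D disC).
rewrite -(@sum_bigcup _ _ _ K Q g disQ).
have X1 : \sum_(x in \bigcup_(i | K i) cluster rho c i) D x <= Del.
  exact: sum_sub _ _ D D0 (subsetT _).
have X2 : \sum_(x in \bigcup_(i | K i) Q i) g x <= 9/4 * alpha * Del + beta * (9/2 * alpha * Del).
  have sub : \bigcup_(i | K i) Q i \subset P1 :\: B 1%N.
    by apply/subsetP => x /bigcupP[i _]; rewrite inE => /andP[_ h].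
  apply: le_trans (sum_sub _ _ g g0 sub) _.
  rewrite big_split /=; apply: lerD => //.
  apply: le_trans hTa.
  by apply: sum_sub => [x|]; [exact: (distS_ge0 hm) | exact: subsetDl].
have : 4 / alpha * \sum_(x in \bigcup_(i | K i) Q i) g x <=
       4 / alpha * (9/4 * alpha * Del + beta * (9/2 * alpha * Del)).
  by apply: ler_wpM2l => //; rewrite divr_ge0 // ltW.
rewrite (_ : 4 / alpha * (9/4 * alpha * Del + beta * (9/2 * alpha * Del)) = 9 * Del + 18 * beta * Del); last first.
  by field; exact: lt0r_neq0.
move=> h.
have bD : 0 <= beta * Del by apply: mulr_ge0 => //; lra.
nra.
Qed.
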